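(* Every safe and aperiodic program is terminating, i.e. $\llbracket\mathtt{P}\rrbracket$ is a total function for every $\mathtt{P}\in\mathrm{SAFE}\cap\mathrm{AP}$. Moreover, the inclusion $\llbracket\mathrm{SAFE}\cap\mathrm{AP}\rrbracket\subseteq\llbracket\mathrm{TERM}\rrbracket$ is strict: some terminating program computes a function not computed by any safe aperiodic program.
   Context: Words and values. $\Sigma\supseteq\{0,1\}$ is a finite alphabet and $\mathbb{W}=\Sigma^*$. Here $|w|$ is the length of $w$ and $1^n$ is the word of $n$ ones. A word counts as true iff it equals $1$. Write $v\unlhd w$ if $w=uvu'$ for some $u,u'$. Operators. Fix a countable set $\mathbb{V}$ of variables and a set $\mathbb{O}$ of operators. Each $\mathsf{op}$ has an arity and a total function $\llbracket\mathsf{op}\rrbracket:\mathbb{W}^{ar(\mathsf{op})}\to\mathbb{W}$. The set $\mathbb{O}$ includes $=,<,\le,0,+1,-1,\mathsf{not},\mathsf{and},\mathsf{or}$. Syntax. - Expressions: $e::=x\mid\mathsf{op}(\bar e)\mid\mathsf{declass}(e,e)$. - Statements: $s::=\mathtt{skip}\mid x:=e\mid s;s\mid\mathtt{if}(e)\{s\}\mathtt{else}\{s\}\mid\mathtt{while}(e)\{s\}\mid\mathtt{break}(e)$. - Programs: $\mathtt{prog}(\bar x)\{s\ \mathtt{return}\ y\}$, with $\mathrm{body}(\mathtt{P})=s$. Semantics. - Stores are total maps $\mathbb{V}\to\mathbb{W}$; the store $\mu_\emptyset$ is constantly $\epsilon$. - $\mathsf{declass}(e_1,e_2)$ evaluates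 to $1^{\min(|w_1|,|w_2|)}$, where $w_i$ is the value of $e_i$. Other expressions evaluate as usual. - Statements evaluate, big-step, to $(\square,\mu')$ with $\square\in\{\top,\bot\}$: - $\mathtt{break}(e)$ yields $\bot$ iff $e$ evaluates to $1$. - A sequence stops on $\bot$. - A conditional takes its first branch iff the guard is $1$. - $\mathtt{while}(e)\{s\}$ returns $(\top,\mu)$ if $e$ is not $1$, and otherwise evaluates $s;\mathtt{while}(e)\{s\}$ to some $(\square,\mu')$ and returns $(\top,\mu')$. - $\pi_c$ denotes the evaluation tree with root $c$; $\sqsubseteq$ and $\sqsubset$ denote the (strict) subtree relations. - $\llbracket\mathtt{P}\rrbracket(\bar w)=\mu'(y)$ when $(\mu_\emptyset[\bar x\leftarrow\bar w],s)$ evaluates to final store $\mu'$. - $\mathtt{P}$ is terminating ($\mathtt{P}\in\mathrm{TERM}$) if $\llbracket\mathtt{P}\rrbracket$ is total. Operator classes ($\mathsf{op}$ of arity $k$). - Neutral: $\llbracket\mathsf{op}\rrbracket$ has values in $\{0,1\}$, or for some $i$, $\llbracket\mathsf{op}\rrbracket(\bar w)\unlhd w_i$ for all $\bar w$. - Positive: $|\llbracket\mathsf{op}\rrbracket(\bar w)|\le\max_i|w_i|+c$ for some constant $c$. - Polynomial: $|\llbracket\mathsf{op}\rrbracket(\bar w)|\le P(\max_i|w_i|)$ for a polynomial $P$. - ''Positive'' means positive and not neutral; ''polynomial'' means polynomial and not positive. Typing judgments. Judgments are $\Gamma,\Delta\vdash^{\tau_{in}}_{\tau_{out}}b:\tau$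 with levels in $\mathbb{N}$, where $\Gamma:\mathbb{V}\to\mathbb{N}$ and $\Delta(\mathsf{op}):\mathbb{N}^2\to\mathcal{P}(\mathbb{N}^{ar(\mathsf{op})+1})$. The rules are: - (VAR) If $\Gamma(x)=\tau$, then $x:\tau$. - (OP) If $\tau_1\to\dots\to\tau_{k+1}\in\Delta(\mathsf{op})(\tau_{in},\tau_{out})$ and $e_i:\tau_i$, then $\mathsf{op}(\bar e):\tau_{k+1}$. - (DCL) If $e_1:\tau_1$, $e_2:\tau_{out}$ and $\tau_1\le\tau\le\tau_{out}$, then $\mathsf{declass}(e_1,e_2):\tau$. - (SUB) Statements may be raised to a higher level. - (SKP) $\mathtt{skip}:0$. - (ASG) If $\Gamma(x)=\tau_1$, $e:\tau_2$, and ($\tau_{out}=0$ or $\tau_1\le\tau_2$), then $x:=e:\tau_1$. - (SEQ), (CND) All components have the same level $\tau$. - (WH) If $\vdash^{\tau}_{\tau_{out}}e:\tau$, $\vdash^{\tau}_{\tau_{out}}s:\tau$ and $1\le\tau\le\tau_{out}$, then $\vdash^{\tau_{in}}_{\tau_{out}}\mathtt{while}(e)\{s\}:\tau$. - (WI) If $\vdash^\tau_\tau e:\tau$, $\vdash^\tau_\tau s:\tau$ and $1\le\tau$, then $\vdash^0_0\mathtt{while}(e)\{s\}:\tau$. - (BRK) If $e:\tau$ and $\tau_{in}\le\tau$, then $\mathtt{break}(e):\tau_{in}$. Safe environments and programs. - $\Delta$ is safe if every operator in $dom(\Delta)$ is neutral, positive or polynomial and polytime computable, and each admissible tuple in $\Delta(\mathsf{op})(\tau_{in},\tau_{out})$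 satisfies: - if neutral, $\tau_{k+1}\le\min_i\tau_i$; - if positive, additionally $\tau_{k+1}<\tau_{in}$ or $\tau_{k+1}=0$; - if polynomial, $\tau_{out}=0$. - $\mathtt{P}\in\mathrm{SAFE}$ iff $\Gamma,\Delta\vdash^0_0\mathrm{body}(\mathtt{P}):\tau$ for some safe $\Delta$, some $\Gamma$ and some $\tau$. Aperiodicity. - $U(x)=\{x\}$, $U(\mathsf{op}(\bar e))=\bigcup U(e_i)$ and $U(\mathsf{declass}(e_1,e_2))=U(e_2)$. - $\mu\equiv_e\mu'$ iff $\mu,\mu'$ agree on $U(e)$. - $\mathtt{P}\in\mathrm{AP}$ iff for no store $\mu$ do there exist $\pi_{(\mu',s')}\sqsupset\pi_{(\mu'',s')}$, both subtrees of $\pi_{(\mu,\mathrm{body}(\mathtt{P}))}$, with $s'=\mathtt{while}(e)\{s''\}$ and $\mu'\equiv_e\mu''$. *)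

(* Defs.v *)
From mathcomp Require Import all_boot.
From Stdlib Require Import Relations.Relation_Operators.

Set Implicit Arguments.
Unset Strict Implicit.
Unset Printing Implicit Defensive.

Section Syntax.
Variable O : Type.

Inductive expr : Type :=
| Var of nat
| Op of O & seq expr
| Declass of expr & expr.

Inductive stmt : Type :=
| Skip
| Asg of nat & expr
| Seq of stmt & stmt
| If of expr & stmt & stmt
| While of expr & stmt
| Break of expr.

Record prog : Type := Prog { params : seq nat; body : stmt; ret : nat }.

End Syntax.

Section Lang.
Variable Sigma : finType.
Variables zero one : Sigma.
(* operators: arity and (total) semantics; sem o is only meaningful on
   lists of length ar o *)
Variable O : Type.
Variable ar : O -> nat.
Variable sem : O -> seq (seq Sigma) -> seq Sigma.

Definition word := seq Sigma.
Definition w1 : word := [:: one].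
Definition w0 : word := [:: zero].
Definition bool_w (b : bool) : word := if b then w1 else w0.

Definition is_eq_op o := ar o = 2 /\ forall u v, sem o [:: u; v] = bool_w (u == v).
Definition is_lt_op o := ar o = 2 /\ forall u v, sem o [:: u; v] = bool_w (size u < size v).
Definition is_le_op o := ar o = 2 /\ forall u v, sem o [:: u; v] = bool_w (size u <= size v).
Definition is_zero_op o := ar o = 0 /\ sem o [::] = w0.
Definition is_succ_op o := ar o = 1 /\ forall w, sem o [:: w] = one :: w.
Definition is_pred_op o := ar o = 1 /\ forall w, sem o [:: w] = behead w.
Definition is_not_op o := ar o = 1 /\ forall w, sem o [:: w] = bool_w (w != w1).
Definition is_and_op o :=
  ar o = 2 /\ forall u v, sem o [:: u; v] = bool_w ((u == w1) && (v == w1)).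
Definition is_or_op o :=
  ar o = 2 /\ forall u v, sem o [:: u; v] = bool_w ((u == w1) || (v == w1)).

Definition has_basic_ops : Prop :=
  (exists o, is_eq_op o) /\ (exists o, is_lt_op o) /\ (exists o, is_le_op o) /\
  (exists o, is_zero_op o) /\ (exists o, is_succ_op o) /\ (exists o, is_pred_op o) /\
  (exists o, is_not_op o) /\ (exists o, is_and_op o) /\ (exists o, is_or_op o).

Fixpoint wf_expr (e : expr O) : bool :=
  match e with
  | Var _ => true
  | Op o es => (size es == ar o) && all wf_expr es
  | Declass e1 e2 => wf_expr e1 && wf_expr e2
  end.

Fixpoint wf_stmt (s : stmt O) : bool :=
  match s with
  | Skip => true
  | Asg _ e => wf_expr e
  | Seq s1 s2 => wf_stmt s1 && wf_stmt s2
  | If e s1 s2 => [&& wf_expr e, wf_stmt s1 & wf_stmt s2]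
  | While e s => wf_expr e && wf_stmt s
  | Break e => wf_expr e
  end.

Definition wf_prog (P : prog O) : bool := wf_stmt (body P).

Definition store := nat -> word.
Definition store0 : store := fun _ => [::].
Definition upd (mu : store) (x : nat) (w : word) : store :=
  fun y => if y == x then w else mu y.

Fixpoint eval (mu : store) (e : expr O) : word :=
  match e with
  | Var x => mu x
  | Op o es => sem o (map (eval mu) es)
  | Declass e1 e2 =>
      nseq (minn (size (eval mu e1)) (size (eval mu e2))) one
  end.

(* big-step semantics; flag true = "top" (continue), false = "bot" (break) *)
Inductive exec : store -> stmt O -> bool -> store -> Prop :=
| E_skip mu : exec mu (Skip O) true mu
| E_asg mu x e : exec mu (Asg x e) true (upd mu x (eval mu e))
| E_seq_bot mu s1 s2 mu' : exec mu s1 false mu' -> exec mu (Seq s1 s2) false mu'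
| E_seq_top mu s1 s2 mu' b mu'' :
    exec mu s1 true mu' -> exec mu' s2 b mu'' -> exec mu (Seq s1 s2) b mu''
| E_if_t mu e s1 s2 b mu' :
    eval mu e = w1 -> exec mu s1 b mu' -> exec mu (If e s1 s2) b mu'
| E_if_f mu e s1 s2 b mu' :
    eval mu e <> w1 -> exec mu s2 b mu' -> exec mu (If e s1 s2) b mu'
| E_wh_f mu e s : eval mu e <> w1 -> exec mu (While e s) true mu
| E_wh_t mu e s b mu' :
    eval mu e = w1 -> exec mu (Seq s (While e s)) b mu' -> exec mu (While e s) true mu'
| E_brk mu e : exec mu (Break e) (eval mu e != w1) mu.

Fixpoint init_store (mu : store) (xs : seq nat) (ws : seq word) : store :=
  match xs, ws with
  | x :: xs', w :: ws' => init_store (upd mu x w) xs' ws'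
  | _, _ => mu
  end.

Definition prog_sem (P : prog O) (ws : seq word) (w : word) : Prop :=
  exists b mu', exec (init_store store0 (params P) ws) (body P) b mu' /\ mu' (ret P) = w.

Definition TERM (P : prog O) : Prop :=
  wf_prog P /\
  forall ws, size ws = size (params P) -> exists w, prog_sem P ws w.

Definition same_fun (P Q : prog O) : Prop :=
  size (params P) = size (params Q) /\
  forall ws w, size ws = size (params P) -> (prog_sem P ws w <-> prog_sem Q ws w).

(* The evaluation tree rooted at configuration (mu, s): [child c c'] holds when
   the (unique, possibly infinite) evaluation tree of c has as immediate
   statement-subtree the evaluation tree of c'. *)
Definition conf := (store * stmt O)%type.

Inductive child : conf -> conf -> Prop :=
| C_seq1 mu s1 s2 : child (mu, Seq s1 s2) (mu, s1)
| C_seq2 mu s1 s2 mu' : exec mu s1 true mu' -> child (mu, Seq s1 s2) (mu', s2)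
| C_if_t mu e s1 s2 : eval mu e = w1 -> child (mu, If e s1 s2) (mu, s1)
| C_if_f mu e s1 s2 : eval mu e <> w1 -> child (mu, If e s1 s2) (mu, s2)
| C_wh mu e s : eval mu e = w1 -> child (mu, While e s) (mu, Seq s (While e s)).

Definition subtree (c c' : conf) : Prop := clos_refl_trans conf child c c'.
Definition strict_subtree (c c' : conf) : Prop := clos_trans conf child c c'.

Fixpoint U (e : expr O) : seq nat :=
  match e with
  | Var x => [:: x]
  | Op _ es => flatten (map U es)
  | Declass _ e2 => U e2
  end.

Definition equiv_e (e : expr O) (mu mu' : store) : Prop :=
  forall x, x \in U e -> mu x = mu' x.

Definition AP (P : prog O) : Prop :=
  ~ exists (mu mu' mu'' : store) (e : expr O) (s'' : stmt O),
      subtree (mu, body P) (mu', While e s'') /\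
      subtree (mu, body P) (mu'', While e s'') /\
      strict_subtree (mu', While e s'') (mu'', While e s'') /\
      equiv_e e mu' mu''.

Definition maxlen (ws : seq word) : nat := foldr maxn 0 (map size ws).

Definition neutral (o : O) : Prop :=
  (forall ws, size ws = ar o -> sem o ws = w0 \/ sem o ws = w1) \/
  (exists i, i < ar o /\
     forall ws, size ws = ar o -> infix (sem o ws) (nth [::] ws i)).

Definition positive (o : O) : Prop :=
  exists c, forall ws, size ws = ar o -> size (sem o ws) <= maxlen ws + c.

Definition peval (cs : seq nat) (n : nat) : nat :=
  \sum_(i < size cs) nth 0 cs i * n ^ i.

Definition polynomial (o : O) : Prop :=
  exists cs, forall ws, size ws = ar o -> size (sem o ws) <= peval cs (maxlen ws).

Variant move := MLeft | MRight | MStay.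

Unset Implicit Arguments.
Record TM := {
  tm_state : finType;
  tm_sym : finType;
  tm_in : Sigma -> tm_sym;
  tm_out : tm_sym -> option Sigma;
  tm_blank : tm_sym;
  tm_sep : tm_sym;
  tm_start : tm_state;
  tm_final : pred tm_state;
  tm_delta : tm_state -> tm_sym -> tm_state * tm_sym * move }.

Definition tm_ok (M : TM) : Prop :=
  (forall a, tm_out M (tm_in M a) = Some a) /\
  tm_out M (tm_blank M) = None /\ tm_out M (tm_sep M) = None.

(* configuration: state, left part (reversed), head symbol, right part;
   the tape is two-way infinite, filled with blanks *)
Definition tconf (M : TM) := (tm_state M * seq (tm_sym M) * tm_sym M * seq (tm_sym M))%type.

Definition tm_step (M : TM) (c : tconf M) : tconf M :=
  let: (q, l, h, r) := c in
  if tm_final M q then c else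
  let: (q', h', m) := tm_delta M q h in
  match m with
  | MStay => (q', l, h', r)
  | MLeft => match l with
             | [::] => (q', [::], tm_blank M, h' :: r)
             | a :: l' => (q', l', a, h' :: r)
             end
  | MRight => match r with
              | [::] => (q', h' :: l, tm_blank M, [::])
              | a :: r' => (q', h' :: l, a, r')
              end
  end.

Fixpoint tm_enc (M : TM) (ws : seq word) : seq (tm_sym M) :=
  match ws with
  | [::] => [::]
  | [:: w] => map (tm_in M) w
  | w :: ws' => map (tm_in M) w ++ tm_sep M :: tm_enc M ws'
  end.

Definition tm_init (M : TM) (ws : seq word) : tconf M :=
  match tm_enc M ws with
  | [::] => (tm_start M, [::], tm_blank M, [::])
  | a :: r => (tm_start M, [::], a, r)
  end.

Fixpoint decode_prefix (M : TM) (s : seq (tm_sym M)) : word :=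
  match s with
  | [::] => [::]
  | a :: s' => match tm_out M a with
               | Some x => x :: decode_prefix M s'
               | None => [::]
               end
  end.

Definition tm_output (M : TM) (c : tconf M) : word :=
  let: (_, _, h, r) := c in decode_prefix M (h :: r).

Definition tm_halted (M : TM) (c : tconf M) : bool :=
  let: (q, _, _, _) := c in tm_final M q.

Definition polytime (k : nat) (f : seq word -> word) : Prop :=
  exists M : TM, tm_ok M /\
  exists c d, forall ws, size ws = k ->
    exists n, n <= c * (size (tm_enc M ws)).+1 ^ d /\
      tm_halted M (iter n (tm_step M) (tm_init M ws)) /\
      tm_output M (iter n (tm_step M) (tm_init M ws)) = f ws.

Set Implicit Arguments.

(* Delta o = Some D: o in dom(Delta), D tin tout ts means the tuple ts of
   length ar o + 1 (last = result level) is in Delta(o)(tin,tout). *)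
Definition op_env := O -> option (nat -> nat -> seq nat -> Prop).
Definition var_env := nat -> nat.

Section Typing.
Variable Gamma : var_env.
Variable Delta : op_env.

Inductive etyp (ti tout : nat) : expr O -> nat -> Prop :=
| T_var x : etyp ti tout (Var O x) (Gamma x)
| T_op o es ts t D :
    Delta o = Some D -> D ti tout (rcons ts t) ->
    size es = ar o -> size ts = size es ->
    (forall i, i < size es -> etyp ti tout (nth (Var O 0) es i) (nth 0 ts i)) ->
    etyp ti tout (Op o es) t
| T_dcl e1 e2 t1 t :
    etyp ti tout e1 t1 -> etyp ti tout e2 tout -> t1 <= t <= tout ->
    etyp ti tout (Declass e1 e2) t.

Inductive styp : nat -> nat -> stmt O -> nat -> Prop :=
| T_sub ti tout s t t' : styp ti tout s t -> t <= t' -> styp ti tout s t'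
| T_skp ti tout : styp ti tout (Skip O) 0
| T_asg ti tout x e t2 :
    etyp ti tout e t2 -> (tout = 0 \/ Gamma x <= t2) -> styp ti tout (Asg x e) (Gamma x)
| T_seq ti tout s1 s2 t :
    styp ti tout s1 t -> styp ti tout s2 t -> styp ti tout (Seq s1 s2) t
| T_cnd ti tout e s1 s2 t :
    etyp ti tout e t -> styp ti tout s1 t -> styp ti tout s2 t ->
    styp ti tout (If e s1 s2) t
| T_wh ti tout e s t :
    etyp t tout e t -> styp t tout s t -> 1 <= t <= tout ->
    styp ti tout (While e s) t
| T_wi e s t :
    etyp t t e t -> styp t t s t -> 1 <= t -> styp 0 0 (While e s) t
| T_brk ti tout e t : etyp ti tout e t -> ti <= t -> styp ti tout (Break e) ti.

End Typing.

Definition safe_env (Delta : op_env) : Prop :=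
  forall o D, Delta o = Some D ->
    (neutral o \/ positive o \/ polynomial o) /\ polytime (ar o) (sem o) /\
    (forall ti tout ts, D ti tout ts -> size ts = (ar o).+1) /\
    (forall ti tout targs tr, D ti tout (rcons targs tr) ->
      (neutral o -> all (fun t => tr <= t) targs) /\
      (positive o /\ ~ neutral o ->
         all (fun t => tr <= t) targs /\ (tr < ti \/ tr = 0)) /\
      (polynomial o /\ ~ positive o -> tout = 0)).

Definition SAFE (P : prog O) : Prop :=
  exists Delta Gamma t, safe_env Delta /\ styp Gamma Delta 0 0 (body P) t.

End Lang.

(* Main.v *)
Require Import Defs.
From mathcomp Require Import all_boot.
From Stdlib Require Import Relations.Relation_Operators Classical.
From mathcomp Require Import zify.

Definition poly (c h : nat) := c * h.+1 ^ c.

Lemma exp_mono a b n : a <= b -> a ^ n <= b ^ n.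
Proof. by case: n => [|n] // h; rewrite leq_exp2r. Qed.

Lemma poly_monoc c c' h : c <= c' -> poly c h <= poly c' h.
Proof. by move=> hc; apply: leq_mul => //; apply: leq_pexp2l. Qed.

Lemma poly_monoh c h h' : h <= h' -> poly c h <= poly c h'.
Proof. by move=> hh; apply: leq_mul => //; apply: exp_mono. Qed.

Definition pbnd (f : nat -> nat) := exists c, forall h, f h <= poly c h.

Lemma pbnd_ext f g : (forall h, f h <= g h) -> pbnd g -> pbnd f.
Proof. by move=> h [c hc]; exists c => x; apply: leq_trans (h x) (hc x). Qed.

Lemma pbnd_const k : pbnd (fun _ => k).
Proof. by exists k => h; rewrite /poly -{1}(muln1 k) leq_mul // expn_gt0. Qed.

Lemma pbnd_id : pbnd id.
Proof. by exists 1 => h; rewrite /poly mul1n expn1. Qed.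

Lemma pbnd_add f g : pbnd f -> pbnd g -> pbnd (fun h => f h + g h).
Proof.
move=> [a ha] [b hb]; exists (a + b) => h; apply: leq_trans (leq_add (ha h) (hb h)) _.
rewrite /poly mulnDl leq_add // leq_mul // leq_pexp2l // ?leq_addr ?leq_addl //.
Qed.

Lemma pbnd_mul f g : pbnd f -> pbnd g -> pbnd (fun h => f h * g h).
Proof.
move=> [a ha] [b hb]; exists (a * b + a + b) => h; apply: leq_trans (leq_mul (ha h) (hb h)) _.
rewrite /poly mulnACA -expnD leq_mul // ?leq_pexp2l //; lia.
Qed.

Lemma poly_comp a b h : poly a (poly b h) <= poly (a * b.+1 ^ a + b * a) h.
Proof.
rewrite /poly.
have h1 : a * (b * h.+1 ^ b).+1 ^ a <= a * (b.+1 ^ a * h.+1 ^ (b * a)).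
  rewrite leq_mul // expnM -expnMn exp_mono //.
  have : 0 < h.+1 ^ b by rewrite expn_gt0.
  set X := h.+1 ^ b; nia.
apply: leq_trans h1 _.
rewrite mulnA leq_mul // ?leq_pexp2l //; lia.
Qed.

Lemma pbnd_comp f g : pbnd f -> pbnd g -> pbnd (fun h => f (g h)).
Proof.
move=> [a ha] [b hb]; exists (a * b.+1 ^ a + b * a) => h.
apply: leq_trans (ha (g h)) _; apply: leq_trans (poly_monoh a _ _ (hb h)) _; exact: poly_comp.
Qed.

Lemma poly_ge1 c h : 0 < c -> 0 < poly c h.
Proof. by move=> hc; rewrite /poly muln_gt0 hc expn_gt0. Qed.

Lemma pbnd_combine n (R : nat -> nat -> Prop) :
  (forall k c c', c <= c' -> R k c -> R k c') ->
  (forall k, k < n -> exists c, R k c) -> exists c, forall k, k < n -> R k c.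
Proof.
move=> hmono; elim: n => [|n IH] h; first by exists 0.
have [c1 h1] := IH (fun k hk => h k (ltnW hk)).
have [c2 h2] := h n (ltnSn n).
exists (maxn c1 c2) => k; rewrite ltnS leq_eqVlt => /orP[/eqP ->|hk].
- by apply: hmono h2; rewrite leq_maxr.
- by apply: hmono (h1 k hk); rewrite leq_maxl.
Qed.

Set Implicit Arguments.
Unset Strict Implicit.
Unset Printing Implicit Defensive.

Section Main.
Variables (Sigma : finType) (zero one : Sigma) (O : Type) (ar : O -> nat)
  (sem : O -> seq (seq Sigma) -> seq Sigma).
Variables (Gamma : var_env) (Delta : op_env O).

Local Notation expr := (expr O).
Local Notation stmt := (stmt O).
Local Notation word := (word Sigma).
Local Notation store := (store Sigma).
Local Notation eval := (eval one sem).
Local Notation exec := (exec one sem).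
Local Notation etyp := (etyp ar Gamma Delta).
Local Notation styp := (styp ar Gamma Delta).

Lemma inv_seq ti tout s1 s2 t : styp ti tout (Seq s1 s2) t ->
  exists t0, t0 <= t /\ styp ti tout s1 t0 /\ styp ti tout s2 t0.
Proof.
intros H; remember (Seq s1 s2) as s0 eqn:E; revert E.
induction H; intros E; try discriminate.
- have [t0 [h1 h2]] := IHstyp E; exists t0; split=> //; exact: leq_trans h1 H0.
- case: E => ? ?; subst; exists t; by [].
Qed.

Lemma inv_if ti tout e s1 s2 t : styp ti tout (If e s1 s2) t ->
  exists t0, t0 <= t /\ etyp ti tout e t0 /\ styp ti tout s1 t0 /\ styp ti tout s2 t0.
Proof.
intros H; remember (If e s1 s2) as s0 eqn:E; revert E.
induction H; intros E; try discriminate.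
- have [t0 [h1 h2]] := IHstyp E; exists t0; split=> //; exact: leq_trans h1 H0.
- case: E => ? ? ?; subst; exists t; by [].
Qed.

Lemma inv_asg ti tout x e t : styp ti tout (Asg x e) t ->
  exists t2, etyp ti tout e t2 /\ (tout = 0 \/ Gamma x <= t2) /\ Gamma x <= t.
Proof.
intros H; remember (Asg x e) as s0 eqn:E; revert E.
induction H; intros E; try discriminate.
- have [t2 [h1 [h2 h3]]] := IHstyp E; exists t2; do 2!split=> //; exact: leq_trans h3 H0.
- case: E => ? ?; subst; exists t2; by [].
Qed.

Lemma inv_brk ti tout e t : styp ti tout (Break e) t ->
  exists t1, etyp ti tout e t1 /\ ti <= t1 /\ ti <= t.
Proof.
intros H; remember (Break e) as s0 eqn:E; revert E.
induction H; intros E; try discriminate.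
- have [t2 [h1 [h2 h3]]] := IHstyp E; exists t2; do 2!split=> //; exact: leq_trans h3 H0.
- case: E => ?; subst; exists t; by [].
Qed.

Lemma inv_wh ti tout e s t : styp ti tout (While e s) t ->
  exists tau tout', [/\ etyp tau tout' e tau, styp tau tout' s tau, 1 <= tau <= tout',
    tau <= t & (tout' = tout \/ (tout = 0 /\ ti = 0))].
Proof.
intros H; remember (While e s) as s0 eqn:E; revert E.
induction H; intros E; try discriminate.
- have [tau [tout' [h1 h2 h3 h4 h5]]] := IHstyp E.
  exists tau, tout'; split=> //; exact: leq_trans h4 H0.
- case: E => ? ?; subst; exists t, tout; split=> //; by left.
- case: E => ? ?; subst; exists t, t; split=> //; [by rewrite H1 leqnn | by right].
Qed.

Fixpoint varsE (e : expr) : seq nat :=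
  match e with
  | Var x => [:: x]
  | Op _ es => flatten (map varsE es)
  | Declass e1 e2 => varsE e1 ++ varsE e2
  end.

Fixpoint varsS (s : stmt) : seq nat :=
  match s with
  | Skip => [::]
  | Asg x e => x :: varsE e
  | Seq s1 s2 => varsS s1 ++ varsS s2
  | If e s1 s2 => varsE e ++ varsS s1 ++ varsS s2
  | While e s => varsE e ++ varsS s
  | Break e => varsE e
  end.

Lemma in_flatten_nth (f : expr -> seq nat) es x :
  x \in flatten (map f es) -> exists i, i < size es /\ x \in f (nth (Var O 0) es i).
Proof.
elim: es => [|e es IH] //=; rewrite mem_cat; case/orP=> [h|h].
- by exists 0.
- by have [i [h1 h2]] := IH h; exists i.+1.
Qed.

Lemma nth_in_flatten (f : expr -> seq nat) es i :
  i < size es -> {subset f (nth (Var O 0) es i) <= flatten (map f es)}.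
Proof.
elim: es i => [|e es IH] [|i] //= hi x hx; rewrite mem_cat ?hx //.
by rewrite (IH i hi x hx) orbT.
Qed.

Hypothesis safeD : safe_env zero one ar sem Delta.

Lemma class_split o D ti tout ts t :
  Delta o = Some D -> D ti tout (rcons ts t) ->
  (neutral zero one ar sem o /\ all (fun t' => t <= t') ts) \/
  (positive ar sem o /\ all (fun t' => t <= t') ts /\ (t < ti \/ t = 0)) \/
  (polynomial ar sem o /\ tout = 0).
Proof.
move=> hD hts; have [hcl [_ [_ h]]] := safeD hD.
have [hn [hp hq]] := h _ _ _ _ hts.
case: (classic (neutral zero one ar sem o)) => Hn; first by left; split=> //; apply: hn.
case: (classic (positive ar sem o)) => Hp.
  by right; left; split=> //; apply: hp.
right; right; split; last by apply: hq; case: hcl => [//|[//|hh]]; split.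
by case: hcl => [//|[//|//]].
Qed.

Lemma size_ts o D ti tout ts t :
  Delta o = Some D -> D ti tout (rcons ts t) -> size ts = ar o.
Proof.
move=> hD hts; have [_ [_ [h _]]] := safeD hD.
by have := h _ _ _ hts; rewrite size_rcons => -[].
Qed.

Lemma etyp_U ti tout e t K : etyp ti tout e t -> K <= t -> ti <= K -> 0 < K -> 0 < tout ->
  forall x, x \in U e -> K <= Gamma x.
Proof.
move=> Hty; induction Hty as [x|o es ts t D hD hts hes hsz _ IH|e1 e2 t1 t _ _ _ IH2 hle];
  move=> hK hti hK0 hto y hy.
- by move: hy; rewrite inE => /eqP ->.
- have [i [hi hyi]] := in_flatten_nth hy.
  case: (class_split hD hts) => [[_ hall]|[[_ [hall [hlt|h0]]]|[_ h0]]].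
  + apply: (IH i hi) => //; apply: leq_trans hK _.
    by apply: (all_nthP 0 hall); rewrite hsz.
  + by have := leq_trans hlt hti; rewrite ltnNge hK.
  + by move: hK; rewrite h0 leqn0 => /eqP h; move: hK0; rewrite h.
  + by move: hto; rewrite h0.
- apply: IH2 => //; apply: leq_trans hK _; by case/andP: hle.
Qed.

Definition w0 := w0 zero.
Definition w1 := w1 one.

Definition closedP (P : word -> Prop) :=
  [/\ forall w v, P w -> infix v w -> P v, P w0, P w1 &
      forall w k, P w -> k <= size w -> P (nseq k one)].

Lemma eval_closed (P : word -> Prop) K (V : seq nat) (mu : store) ti tout e t :
  closedP P -> etyp ti tout e t -> K <= t -> ti <= K -> 0 < K -> 0 < tout ->
  {subset varsE e <= V} -> (forall x, x \in V -> K <= Gamma x -> P (mu x)) ->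
  P (eval mu e).
Proof.
move=> [Pinf P0 P1 Pn] Hty; induction Hty as [x|o es ts t D hD hts hes hsz _ IH|e1 e2 t1 t _ _ _ IH2 hle];
  move=> hK hti hK0 hto hV hI.
- by apply: hI => //; apply: hV; rewrite inE.
- case: (class_split hD hts) => [[hn hall]|[[_ [hall [hlt|h0]]]|[_ h0]]].
  + rewrite /=; case: hn => [hb|[i [hi hinf]]].
    * by case: (hb (map (eval mu) es)); [rewrite size_map | move=> -> | move=> ->].
    * have := hinf (map (eval mu) es); rewrite size_map => /(_ hes).
      rewrite (nth_map (Var O 0)) ?hes // => hinf'.
      apply: Pinf hinf'; rewrite -hes in hi; apply: (IH i hi) => //.
      -- apply: leq_trans hK _; by apply: (all_nthP 0 hall); rewrite hsz.
      -- by move=> z hz; apply: hV; apply: (nth_in_flatten hi).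
  + by have := leq_trans hlt hti; rewrite ltnNge hK.
  + by move: hK; rewrite h0 leqn0 => /eqP h; move: hK0; rewrite h.
  + by move: hto; rewrite h0.
- rewrite /=; apply: (Pn (eval mu e2)); last by rewrite geq_minr.
  apply: IH2 => //.
  + apply: leq_trans hK _; by case/andP: hle.
  + by move=> z hz; apply: hV; rewrite /= mem_cat hz orbT.
Qed.

Definition Inv (P : word -> Prop) K (V : seq nat) (mu : store) :=
  forall x, x \in V -> K <= Gamma x -> P (mu x).

Lemma upd_eq (mu : store) x w y : upd mu x w y = if y == x then w else mu y.
Proof. by []. Qed.

Lemma wh_typ ti tout e s t tau tout' :
  etyp tau tout' e tau -> styp tau tout' s tau -> 1 <= tau <= tout' -> tau <= t ->
  (tout' = tout \/ (tout = 0 /\ ti = 0)) -> 0 < tout -> 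
  styp tau tout (Seq s (While e s)) tau /\ tout' = tout.
Proof.
move=> he hs hr _ [<-|[h _]] hto; last by move: hto; rewrite h.
by split=> //; apply: T_seq => //; apply: T_wh.
Qed.

Lemma exec_closed (P : word -> Prop) K (V : seq nat) :
  closedP P -> forall mu s b mu', exec mu s b mu' ->
  forall ti tout t, styp ti tout s t -> 0 < tout -> ti <= K -> t <= K -> 0 < K ->
  {subset varsS s <= V} -> Inv P K V mu -> Inv P K V mu'.
Proof.
move=> hP mu s b mu' H; induction H; move=> ti tout t Hty hto hti htK hK hV hI //.
- have [t2 [he [hto' hx]]] := inv_asg Hty.
  move=> y hy hKy; rewrite upd_eq; case: (y =P x) => [eq|_]; last exact: hI.
  subst y; case: hto' => [h0|hxt2]; first by move: hto; rewrite h0.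
  apply: (eval_closed hP he (leq_trans hKy hxt2) _ _ _ _ hI) => //.
  by move=> z hz; apply: hV; rewrite /= inE hz orbT.
- have [t0 [h1 [h2 h3]]] := inv_seq Hty.
  apply: (IHexec _ _ _ h2) => //; first exact: leq_trans h1 htK.
  by move=> z hz; apply: hV; rewrite /= mem_cat hz.
- have [t0 [h1 [h2 h3]]] := inv_seq Hty.
  have hVs : {subset varsS s1 <= V} by move=> z hz; apply: hV; rewrite /= mem_cat hz.
  have hVs2 : {subset varsS s2 <= V} by move=> z hz; apply: hV; rewrite /= mem_cat hz orbT.
  have ht0 := leq_trans h1 htK.
  exact: (IHexec2 _ _ _ h3 hto hti ht0 hK hVs2 (IHexec1 _ _ _ h2 hto hti ht0 hK hVs hI)).
- have [t0 [h1 [h2 [h3 h4]]]] := inv_if Hty.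
  apply: (IHexec _ _ _ h3) => //; first exact: leq_trans h1 htK.
  by move=> z hz; apply: hV; rewrite /= !mem_cat hz orbT.
- have [t0 [h1 [h2 [h3 h4]]]] := inv_if Hty.
  apply: (IHexec _ _ _ h4) => //; first exact: leq_trans h1 htK.
  by move=> z hz; apply: hV; rewrite /= !mem_cat hz !orbT.
- have [tau [tout' [h1 h2 h3 h4 h5]]] := inv_wh Hty.
  have [hs _] := wh_typ h1 h2 h3 h4 h5 hto.
  apply: (IHexec _ _ _ hs hto (leq_trans h4 htK) (leq_trans h4 htK) hK _ hI).
  by move=> z; rewrite /= !mem_cat => /orP[hz|/orP[hz|hz]]; apply: hV;
    rewrite /= mem_cat hz ?orbT.
Qed.

Local Notation conf := (conf Sigma O).
Local Notation child := (child one sem).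
Local Notation subtree := (subtree one sem).
Local Notation strict_subtree := (strict_subtree one sem).

Definition APr (root : conf) := ~ exists (mu' mu'' : store) (e : expr) (s'' : stmt),
  subtree root (mu', While e s'') /\ subtree root (mu'', While e s'') /\
  strict_subtree (mu', While e s'') (mu'', While e s'') /\ equiv_e e mu' mu''.

Lemma sub_trans (a b c : conf) : subtree a b -> subtree b c -> subtree a c.
Proof. move=> h1 h2; exact: rt_trans h1 h2. Qed.

Lemma sub_child (a b c : conf) : subtree a b -> child b c -> subtree a c.
Proof. move=> h1 h2; apply: sub_trans h1 _; exact: rt_step. Qed.

Lemma t_rt (a b c : conf) : strict_subtree a b -> subtree b c -> strict_subtree a c.
Proof.
move=> h1 h2; elim: h2 a h1 => [x y hxy|x|x y z _ IH1 _ IH2] a h1 //.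
- exact: t_trans h1 (t_step _ _ _ _ hxy).
- exact: IH2 (IH1 _ h1).
Qed.

Lemma t_to_rt (a b : conf) : strict_subtree a b -> subtree a b.
Proof. elim=> [x y h|x y z _ h1 _ h2]; [exact: rt_step | exact: rt_trans h1 h2]. Qed.

Inductive pchain (e : expr) (s : stmt) : store -> seq store -> Prop :=
| PC1 mu : pchain e s mu [:: mu]
| PC2 mu mu1 ms : eval mu e = w1 -> exec mu s true mu1 -> pchain e s mu1 ms ->
    pchain e s mu (mu :: ms).

Inductive iters (e : expr) (s : stmt) : store -> seq store -> store -> Prop :=
| I_stop mu : eval mu e <> w1 -> iters e s mu [:: mu] mu
| I_brk mu mu' : eval mu e = w1 -> exec mu s false mu' -> iters e s mu [:: mu] mu'
| I_step mu mu1 ms mu' : eval mu e = w1 -> exec mu s true mu1 -> iters e s mu1 ms mu' ->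
    iters e s mu (mu :: ms) mu'.

Lemma iters_pchain e s mu ms mu' : iters e s mu ms mu' -> pchain e s mu ms.
Proof. elim=> [m h|m m0 h hx|m m1 ms0 m0 he hx _ IH]; [exact: PC1|exact: PC1|exact: PC2 he hx IH]. Qed.

Lemma exec_iters_gen mu s0 b mu' : exec mu s0 b mu' -> forall e s,
  (s0 = While e s -> exists ms, iters e s mu ms mu') /\
  (s0 = Seq s (While e s) -> eval mu e = w1 -> exists ms, iters e s mu ms mu').
Proof.
elim=> {mu s0 b mu'}.
- by move=> mu e s; split.
- by move=> mu x e0 e s; split.
- move=> mu s1 s2 mu' H _ e s; split=> // [[h1 h2]] he; subst.
  by exists [:: mu]; apply: I_brk.
- move=> mu s1 s2 mu' b mu'' H1 _ H2 IH2 e s; split=> // [[h1 h2]] he; subst.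
  have [h _] := IH2 e s; have [ms hms] := h erefl.
  by exists (mu :: ms); apply: I_step H1 hms.
- by move=> *; split.
- by move=> *; split.
- move=> mu e0 s0 he e s; split=> // [[h1 h2]]; subst.
  by exists [:: mu]; apply: I_stop.
- move=> mu e0 s0 b mu' he H IH e s; split=> // [[h1 h2]]; subst.
  by have [_ h] := IH e s; apply: h.
- by move=> *; split.
Qed.

Lemma exec_iters mu e s b mu' : exec mu (While e s) b mu' -> exists ms, iters e s mu ms mu'.
Proof. by move=> H; have [h _] := exec_iters_gen H e s; apply: h. Qed.

Lemma reach_body (root : conf) mu e s :
  subtree root (mu, While e s) -> eval mu e = w1 -> subtree root (mu, s).
Proof.
move=> h he; apply: sub_child (sub_child h (C_wh _ he)) _; exact: C_seq1.
Qed.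

Lemma strict_step mu mu1 e s : eval mu e = w1 -> exec mu s true mu1 ->
  strict_subtree (mu, While e s) (mu1, While e s).
Proof.
move=> he hx; apply: t_trans (t_step _ _ _ _ (C_wh _ he)) (t_step _ _ _ _ _).
exact: C_seq2.
Qed.

Lemma reach_step (root : conf) mu mu1 e s : subtree root (mu, While e s) ->
  eval mu e = w1 -> exec mu s true mu1 -> subtree root (mu1, While e s).
Proof.
move=> h he hx; apply: sub_trans h _; exact: t_to_rt (strict_step he hx).
Qed.

Definition key (e : expr) (mu : store) : seq word := map mu (U e).

Lemma pchain_reach e s mu ms : pchain e s mu ms -> forall i, i < size ms ->
  subtree (mu, While e s) (nth mu ms i, While e s).
Proof.
elim=> [m|m m1 ms' he hx _ IH] [|i] //= hi; try exact: rt_refl.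
apply: sub_trans (t_to_rt (strict_step he hx)) _.
have := IH i hi; by rewrite (set_nth_default m1).
Qed.

Lemma pchain_uniq (root : conf) e s mu ms : APr root -> pchain e s mu ms ->
  subtree root (mu, While e s) -> uniq (map (key e) ms).
Proof.
move=> hAP H; elim: H => [m|m m1 ms' he hx hc IH] hr //=.
rewrite (IH (reach_step hr he hx)) andbT.
apply/negP => hin; apply: hAP.
set i := index (key e m) (map (key e) ms').
have hi : i < size ms' by rewrite -(size_map (key e)) index_mem.
have hnth : key e (nth m1 ms' i) = key e m.
  by rewrite -(nth_map m1 (key e m1)) // nth_index.
exists m, (nth m1 ms' i), e, s; split=> //; split.
  apply: sub_trans (reach_step hr he hx) _; exact: pchain_reach hc i hi.
split; first exact: t_rt (strict_step he hx) (pchain_reach hc hi).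
move=> x hxU; move/eq_in_map: hnth => /(_ x hxU) ->; by [].
Qed.

Definition reach (Rt : conf -> Prop) (c : conf) := exists r, Rt r /\ subtree r c.
Definition APall (Rt : conf -> Prop) := forall r, Rt r -> APr r.

Lemma reach_child Rt a b : reach Rt a -> child a b -> reach Rt b.
Proof. by move=> [r [hr h]] hc; exists r; split=> //; exact: sub_child h hc. Qed.

Lemma reach_body2 Rt mu e s : reach Rt (mu, While e s) -> eval mu e = w1 -> reach Rt (mu, s).
Proof. by move=> [r [hr h]] he; exists r; split=> //; exact: reach_body h he. Qed.

Lemma reach_step2 Rt mu mu1 e s : reach Rt (mu, While e s) ->
  eval mu e = w1 -> exec mu s true mu1 -> reach Rt (mu1, While e s).
Proof. by move=> [r [hr h]] he hx; exists r; split=> //; exact: reach_step h he hx. Qed.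

Definition infixes (w : word) : seq word :=
  [seq take l (drop k w) | k <- iota 0 (size w).+1, l <- iota 0 (size w).+1].

Arguments infixes : simpl never.

Lemma mem_infixes v w : (v \in infixes w) = infix v w.
Proof.
apply/idP/idP.
- case/allpairsP => -[k l] [_ _ /= ->].
  exact: infix_trans (infix_take _ _) (infix_drop _ _).
- move=> h; have := h; rewrite infixE => /eqP {1}<-.
  rewrite /infixes; apply: (allpairs_f (fun k l => take l (drop k w))); rewrite mem_iota /= ltnS.
  + by rewrite infixTindex.
  + exact: size_infix.
Qed.

Lemma size_infixes w : size (infixes w) = (size w).+1 * (size w).+1.
Proof. by rewrite /infixes size_allpairs size_iota. Qed.

Definition Sset K N (V : seq nat) (mu : store) : seq word :=
  flatten [seq infixes (mu x) | x <- [seq x <- V | K <= Gamma x]] ++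
  [:: w0; w1] ++ mkseq (fun k => nseq k one) N.+1.

Lemma mem_nseqS K N V mu k : k <= N -> nseq k one \in Sset K N V mu.
Proof.
move=> hk; rewrite !mem_cat; apply/orP; right; apply/orP; right.
by apply/mapP; exists k => //; rewrite mem_iota.
Qed.

Lemma Sset_size K N V mu w : 0 < N -> Inv (fun w => size w <= N) K V mu ->
  w \in Sset K N V mu -> size w <= N.
Proof.
move=> hN hI; rewrite !mem_cat => /orP[|/orP[]].
- case/flattenP => ws /mapP [x]; rewrite mem_filter => /andP[hK hx] -> hw.
  rewrite mem_infixes in hw; exact: leq_trans (size_infix hw) (hI x hx hK).
- by rewrite !inE => /orP[] /eqP ->.
- by case/mapP => k; rewrite mem_iota /= => hk ->; rewrite size_nseq.
Qed.

Lemma Sset_closed K N V mu : 0 < N -> Inv (fun w => size w <= N) K V mu ->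
  closedP (fun w => w \in Sset K N V mu).
Proof.
move=> hN hI; split.
- move=> w v hw hvw; have hw0 := hw; rewrite /Sset !mem_cat in hw0; case/orP: hw0 => [|/orP[]].
  + case/flattenP => ws /mapP [x hx ->]; rewrite mem_infixes => hw'.
    rewrite /Sset !mem_cat; apply/orP; left; apply/flattenP; exists (infixes (mu x)).
      by apply/mapP; exists x.
    rewrite mem_infixes; exact: infix_trans hvw hw'.
  + have hsub := infixW hvw; move=> hw1.
    have: size v <= 1.
      by move: hw1; rewrite !inE => /orP[] /eqP hh; subst w; exact: size_subseq hsub.
    case: v hsub hvw => [|a [|b v]] //= hsub _ _.
    * exact: (mem_nseqS _ _ _ (k := 0)).
    * move: hsub; rewrite sub1seq => ha; rewrite /Sset !mem_cat; apply/orP; right; apply/orP; left.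
      move: hw1; rewrite !inE => /orP[] /eqP hww; subst w; move: ha;
        rewrite /w0 /w1 /Defs.w0 /Defs.w1 mem_seq1 => /eqP ->; by rewrite eqxx ?orbT.
  + case/mapP => k; rewrite mem_iota /= ltnS => hk hwk; subst w.
    have hall: all (pred1 one) v.
      apply/allP => y hy; have := mem_subseq (infixW hvw) hy.
      by rewrite mem_nseq => /andP[_ h].
    move/all_pred1P: hall => ->; apply: mem_nseqS.
    by apply: leq_trans (size_infix hvw) _; rewrite size_nseq.
- by rewrite !mem_cat inE eqxx orbT.
- by rewrite !mem_cat !inE eqxx !orbT.
- move=> w k hw hk; apply: mem_nseqS; exact: leq_trans hk (Sset_size hN hI hw).
Qed.

Lemma Sset_init K N V mu : Inv (fun w => w \in Sset K N V mu) K V mu.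
Proof.
move=> x hx hK; rewrite !mem_cat; apply/orP; left; apply/flattenP.
exists (infixes (mu x)); first by apply/mapP; exists x; rewrite // mem_filter hK.
by rewrite mem_infixes infix_refl.
Qed.

Lemma size_flat_gen (f : nat -> seq word) B K (V : seq nat) :
  (forall x, x \in V -> K <= Gamma x -> size (f x) <= B) ->
  size (flatten [seq f x | x <- [seq x <- V | K <= Gamma x]]) <= size V * B.
Proof.
elim: V => [|x V IH] hI //=.
have hIV : forall y, y \in V -> K <= Gamma y -> size (f y) <= B.
  by move=> y hy; apply: hI; rewrite inE hy orbT.
case: ifP => hK /=; last by apply: leq_trans (IH hIV) _; lia.
have h := hI x (mem_head _ _) hK.
have := IH hIV; rewrite size_cat mulSn; lia.
Qed.

Lemma size_flat K N V mu : Inv (fun w => size w <= N) K V mu ->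
  size (flatten [seq infixes (mu x) | x <- [seq x <- V | K <= Gamma x]])
    <= size V * (N.+1 * N.+1).
Proof.
move=> hI; apply: (size_flat_gen (f := fun x => infixes (mu x))) => x hx hK.
by rewrite size_infixes; apply: leq_mul; rewrite ltnS; apply: hI.
Qed.

Lemma size_Sset K N V mu : Inv (fun w => size w <= N) K V mu ->
  size (Sset K N V mu) <= size V * (N.+1 * N.+1) + N.+3.
Proof.
move=> hI; have := size_flat hI.
rewrite /Sset !size_cat size_mkseq /=; lia.
Qed.

Fixpoint seqsN (n : nat) (A : seq word) : seq (seq word) :=
  match n with
  | 0 => [:: [::]]
  | n'.+1 => [seq a :: l | a <- A, l <- seqsN n' A]
  end.

Lemma size_seqsN n A : size (seqsN n A) = size A ^ n.
Proof. by elim: n => [|n IH] //=; rewrite size_allpairs IH expnS. Qed.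

Lemma mem_seqsN (A : seq word) (l : seq nat) (m : store) :
  (forall x, x \in l -> m x \in A) -> map m l \in seqsN (size l) A.
Proof.
elim: l => [|x l IH] h /=; first by rewrite inE.
apply: (allpairs_f (fun a r => a :: r)); first by apply: h; rewrite inE eqxx.
by apply: IH => y hy; apply: h; rewrite inE hy orbT.
Qed.

Fixpoint allst (P : store -> Prop) (ms : seq store) : Prop :=
  match ms with [::] => True | m :: r => P m /\ allst P r end.

Lemma iters_inv (I : store -> Prop) e s mu ms mu' :
  (forall m b m', exec m s b m' -> I m -> I m') ->
  iters e s mu ms mu' -> I mu -> I mu' /\ allst I ms.
Proof.
move=> hI H; elim: H => [m _|m m' _ hx|m m1 ms0 m' _ hx _ IH] hm /=.
- by [].
- by split=> //; apply: hI hx hm.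
- have [h1 h2] := IH (hI _ _ _ hx hm); by [].
Qed.

Lemma keys_in (P : store -> Prop) e (F : seq (seq word)) ms :
  allst P ms -> (forall m, P m -> key e m \in F) -> {subset map (key e) ms <= F}.
Proof.
elim: ms => [|m ms IH] //= [hm hms] hk k; rewrite inE => /orP[/eqP ->|hk'].
- exact: hk.
- exact: IH.
Qed.

Lemma chain_count (root : conf) e s mu ms (F : seq (seq word)) : APr root ->
  pchain e s mu ms -> subtree root (mu, While e s) ->
  {subset map (key e) ms <= F} -> size ms <= size F.
Proof.
move=> hAP hc hr hsub; rewrite -(size_map (key e)).
exact: uniq_leq_size (pchain_uniq hAP hc hr) hsub.
Qed.

Lemma chain_count2 Rt e s mu ms (F : seq (seq word)) : APall Rt ->
  pchain e s mu ms -> reach Rt (mu, While e s) ->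
  {subset map (key e) ms <= F} -> size ms <= size F.
Proof. move=> hA hc [r [hr h]] hsub; exact: chain_count (hA r hr) hc h hsub. Qed.

Definition Hm j (V : seq nat) (mu : store) := \max_(x <- V | j <= Gamma x) size (mu x).

Lemma leq_Hm j V mu x : x \in V -> j <= Gamma x -> size (mu x) <= Hm j V mu.
Proof. by move=> hx hj; rewrite /Hm; apply: (@leq_bigmax_seq _ _ (fun x => j <= Gamma x) (fun x => size (mu x)) x). Qed.

Lemma Hm_leq j V mu m : (forall x, x \in V -> j <= Gamma x -> size (mu x) <= m) -> Hm j V mu <= m.
Proof. by move=> h; rewrite /Hm; apply/bigmax_leqP_seq. Qed.

Lemma Hm_mono j j' V mu : j <= j' -> Hm j' V mu <= Hm j V mu.
Proof. move=> hj; apply: Hm_leq => x hx hj'; apply: leq_Hm => //; exact: leq_trans hj hj'. Qed.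

Lemma Inv_Hm K V mu : Inv (fun w => size w <= maxn 1 (Hm K V mu)) K V mu.
Proof. move=> x hx hK; rewrite leq_max; apply/orP; right; exact: leq_Hm. Qed.

Lemma etyp_Uvars ti tout e t : etyp ti tout e t -> {subset U e <= varsE e}.
Proof.
move=> H; induction H as [x|o es ts t D hD hts hes hsz _ IH|e1 e2 t1 t _ _ _ IH2 hle] => y hy //=.
- have [i [hi hyi]] := in_flatten_nth hy; apply: (nth_in_flatten hi); exact: IH.
- by rewrite mem_cat IH2 ?orbT.
Qed.

Section Loop.
Variable Rt : conf -> Prop.
Hypothesis hAP : APall Rt.
Variables (e : expr) (s : stmt) (tau tout' : nat) (V : seq nat).
Hypotheses (he : etyp tau tout' e tau) (hs : styp tau tout' s tau) (htau : 1 <= tau <= tout')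
  (hV : {subset varsS (While e s) <= V}).

Lemma hVs : {subset varsS s <= V}.
Proof. by move=> x hx; apply: hV; rewrite /= mem_cat hx orbT. Qed.

Lemma hUV : forall x, x \in U e -> x \in V /\ tau <= Gamma x.
Proof.
case/andP: htau => h1 h2 x hx; split.
- by apply: hV; rewrite /= mem_cat (etyp_Uvars he hx).
- apply: (etyp_U he) => //; exact: leq_trans h1 h2.
Qed.

Lemma body_pres (P : word -> Prop) : closedP P -> forall m b m', exec m s b m' ->
  Inv P tau V m -> Inv P tau V m'.
Proof.
case/andP: htau => h1 h2 hP m b m' hx; apply: (exec_closed hP hx hs) => //.
- exact: leq_trans h1 h2.
- exact: hVs.
Qed.

Definition Fk (mu : store) := seqsN (size (U e)) (Sset tau (maxn 1 (Hm tau V mu)) V mu).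

Lemma key_Fk mu m : Inv (fun w => w \in Sset tau (maxn 1 (Hm tau V mu)) V mu) tau V m ->
  key e m \in Fk mu.
Proof.
move=> hI; apply: mem_seqsN => x hx; have [h1 h2] := hUV hx; exact: hI.
Qed.

Lemma Sclosed mu : closedP (fun w => w \in Sset tau (maxn 1 (Hm tau V mu)) V mu).
Proof. apply: Sset_closed; [by rewrite leq_max | exact: Inv_Hm]. Qed.

Lemma loop_term : (forall m, reach Rt (m, s) -> exists b m', exec m s b m') ->
  forall mu, reach Rt (mu, While e s) -> exists mu', exec mu (While e s) true mu'.
Proof.
move=> H1 mu hr.
pose I := Inv (fun w => w \in Sset tau (maxn 1 (Hm tau V mu)) V mu) tau V.
have claim : forall n m, reach Rt (m, While e s) -> I m ->
  (exists m', exec m (While e s) true m') \/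
  (exists ms, [/\ pchain e s m ms, size ms = n.+1 & {subset map (key e) ms <= Fk mu}]).
  elim=> [|n IH] m hm hIm.
    right; exists [:: m]; split=> //; first exact: PC1.
    by move=> k; rewrite inE => /eqP ->; apply: key_Fk.
  case: (eval m e =P w1) => hg; last by left; exists m; apply: E_wh_f.
  have [b [m1 hx]] := H1 _ (reach_body2 hm hg).
  case: b hx => hx; last by left; exists m1; apply: E_wh_t hg _; apply: E_seq_bot.
  have hIm1 : I m1 := body_pres (Sclosed mu) hx hIm.
  case: (IH m1 (reach_step2 hm hg hx) hIm1) => [[m' hm']|[ms [hc hsz hsub]]].
    by left; exists m'; apply: E_wh_t hg _; apply: E_seq_top hx hm'.
  right; exists (m :: ms); split=> //=; first exact: PC2 hg hx hc.
    by rewrite hsz.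
  move=> k; rewrite inE => /orP[/eqP ->|hk]; [exact: key_Fk | exact: hsub].
have hI0 : I mu by exact: Sset_init.
case: (claim (size (Fk mu)) mu hr hI0) => // [[ms [hc hsz hsub]]].
by have := chain_count2 hAP hc hr hsub; rewrite hsz ltnn.
Qed.

End Loop.

Lemma term_all (Rt : conf -> Prop) : APall Rt -> forall s ti tout t, styp ti tout s t ->
  forall mu, reach Rt (mu, s) -> exists b mu', exec mu s b mu'.
Proof.
move=> hAP; elim=> [|x e|s1 IH1 s2 IH2|e s1 IH1 s2 IH2|e s IH|e] ti tout t Hty mu hr.
- by exists true, mu; apply: E_skip.
- by eexists; eexists; apply: E_asg.
- have [t0 [_ [h1 h2]]] := inv_seq Hty.
  have [b [mu1 hx1]] := IH1 _ _ _ h1 mu (reach_child hr (C_seq1 _ _ _ _ _)).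
  case: b hx1 => hx1; last by exists false, mu1; apply: E_seq_bot.
  have [b [mu2 hx2]] := IH2 _ _ _ h2 mu1 (reach_child hr (C_seq2 _ hx1)).
  by exists b, mu2; apply: E_seq_top hx1 hx2.
- have [t0 [_ [_ [h1 h2]]]] := inv_if Hty.
  case: (eval mu e =P w1) => hg.
  + have [b [mu1 hx]] := IH1 _ _ _ h1 mu (reach_child hr (C_if_t _ _ hg)).
    by exists b, mu1; apply: E_if_t.
  + have [b [mu1 hx]] := IH2 _ _ _ h2 mu (reach_child hr (C_if_f _ _ hg)).
    by exists b, mu1; apply: E_if_f.
- have [tau [tout' [h1 h2 h3 _ _]]] := inv_wh Hty.
  have [mu' hx] := loop_term hAP h1 h2 h3 (fun x hx => hx) (fun m hm => IH _ _ _ h2 m hm) hr.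
  by exists true, mu'.
- by eexists; eexists; apply: E_brk.
Qed.

Lemma etyp_wf ti tout e t : etyp ti tout e t -> wf_expr ar e.
Proof.
move=> H; induction H as [x|o es ts t D hD hts hes hsz _ IH|e1 e2 t1 t _ IH1 _ IH2 hle] => //=.
- rewrite hes eqxx /=; apply/(all_nthP (Var O 0)) => i hi; exact: IH.
- by rewrite IH1 IH2.
Qed.

Lemma styp_wf ti tout s t : styp ti tout s t -> wf_stmt ar s.
Proof.
elim=> //=; intros;
  repeat match goal with H : etyp _ _ _ _ |- _ => have := etyp_wf H; clear H; intro end;
  repeat match goal with H : is_true _ |- _ => rewrite H; clear H end; done.
Qed.

Lemma maxlen_leq (ws : seq word) m :
  (forall i, i < size ws -> size (nth [::] ws i) <= m) -> maxlen ws <= m.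
Proof.
elim: ws => [|w ws IH] h //=; rewrite geq_max; apply/andP; split.
- exact: (h 0).
- by apply: IH => i hi; apply: (h i.+1).
Qed.

Lemma size_nth_maxlen (ws : seq word) i : size (nth [::] ws i) <= maxlen ws.
Proof.
elim: ws i => [|w ws IH] [|i] //=; first by rewrite leq_maxl.
by apply: leq_trans (IH i) _; rewrite leq_maxr.
Qed.

Lemma peval_bnd cs : pbnd (peval cs).
Proof.
exists ((\sum_(i < size cs) nth 0 cs i) + size cs) => n.
rewrite /peval; apply: (@leq_trans ((\sum_(i < size cs) nth 0 cs i) * n.+1 ^ size cs)).
  rewrite big_distrl /=; apply: leq_sum => i _; apply: leq_mul => //.
  apply: leq_trans (exp_mono _ _ _ (leqnSn n)) _; apply: leq_pexp2l => //; exact: ltnW.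
rewrite /poly; apply: leq_mul; first exact: leq_addr.
by apply: leq_pexp2l => //; rewrite leq_addl.
Qed.

Lemma op_poly o D : Delta o = Some D -> exists co, forall ws : seq word, size ws = ar o ->
  size (sem o ws) <= poly co (maxlen ws).
Proof.
move=> hD; have [hcl _] := safeD hD.
case: hcl => [[hb|[i [hi hinf]]]|[[c hc]|[cs hcs]]].
- exists 1 => ws hws; case: (hb ws hws) => ->; exact: (poly_ge1 1 _ isT).
- exists 1 => ws hws; apply: leq_trans (size_infix (hinf ws hws)) _.
  apply: leq_trans (size_nth_maxlen _ _) _; rewrite /poly mul1n expn1; exact: leqnSn.
- have [co hco] := pbnd_add _ _ pbnd_id (pbnd_const c).
  by exists co => ws hws; apply: leq_trans (hc ws hws) (hco _).
- have [co hco] := peval_bnd cs.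
  by exists co => ws hws; apply: leq_trans (hcs ws hws) (hco _).
Qed.

Lemma eval_bnd_loop (V : seq nat) ti tout e t : etyp ti tout e t -> 0 < tout ->
  {subset varsE e <= V} ->
  exists c, forall mu j, j <= t -> size (eval mu e) <= Hm j V mu + c.
Proof.
move=> H; induction H as [x|o es ts t D hD hts hes hsz _ IH|e1 e2 t1 t _ _ _ IH2 hle];
  move=> hto hV.
- by exists 0 => mu j hj; rewrite addn0; apply: leq_Hm => //; apply: hV; rewrite inE.
- have hIH : forall i, i < size es -> exists c, forall mu j, j <= nth 0 ts i ->
      size (eval mu (nth (Var O 0) es i)) <= Hm j V mu + c.
    move=> i hi; apply: IH => // z hz; apply: hV; exact: nth_in_flatten hi z hz.
  have [cs hcs] := pbnd_combine _ _ (fun k c c' hc h mu j hj => leq_trans (h mu j hj)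
      (leq_add (leqnn _) hc)) hIH.
  have hargs : all (fun t' => t <= t') ts -> forall mu j, j <= t -> forall i, i < size es ->
      size (nth [::] (map (eval mu) es) i) <= Hm j V mu + cs.
    move=> hall mu j hj i hi; rewrite (nth_map (Var O 0)) //; apply: hcs => //.
    apply: leq_trans hj _; apply: (all_nthP 0 hall); by rewrite hsz.
  case: (class_split hD hts) => [[hn hall]|[[[c hc] [hall _]]|[_ h0]]].
  + exists (cs + 1) => mu j hj /=; case: hn => [hb|[i [hi hinf]]].
    * case: (hb (map (eval mu) es)) => [|->|->]; rewrite ?size_map //= addnA leq_addl //.
    * have := hinf (map (eval mu) es); rewrite size_map => /(_ hes) hi'.
      apply: leq_trans (size_infix hi') _; rewrite addnA; apply: leq_trans (leq_addr 1 _).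
      by apply: hargs => //; rewrite hes.
  + exists (cs + c) => mu j hj /=; apply: leq_trans (hc _ _) _; first by rewrite size_map.
    rewrite addnA leq_add2r; apply: maxlen_leq => i; rewrite size_map => hi; exact: hargs.
  + by move: hto; rewrite h0.
- have hV2 : {subset varsE e2 <= V} by move=> z hz; apply: hV; rewrite /= mem_cat hz orbT.
  have [c2 hc2] := IH2 hto hV2.
  exists c2 => mu j hj /=; rewrite size_nseq; apply: leq_trans (geq_minr _ _) _.
  apply: hc2; apply: leq_trans hj _; by case/andP: hle.
Qed.

Lemma eval_bnd_top (V : seq nat) e t : etyp 0 0 e t -> {subset varsE e <= V} ->
  exists c, forall mu, size (eval mu e) <= poly c (Hm 0 V mu).
Proof.
move=> H; induction H as [x|o es ts t D hD hts hes hsz _ IH|e1 e2 t1 t _ _ _ IH2 hle];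
  move=> hV.
- exists 1 => mu; rewrite /poly mul1n expn1; apply: (leq_trans _ (leqnSn _)).
  by apply: leq_Hm => //; apply: hV; rewrite inE.
- have hIH : forall i, i < size es -> exists c, forall mu,
      size (eval mu (nth (Var O 0) es i)) <= poly c (Hm 0 V mu).
    move=> i hi; apply: IH => // z hz; apply: hV; exact: nth_in_flatten hi z hz.
  have [cs hcs] := pbnd_combine _ _ (fun k c c' hc h mu => leq_trans (h mu) (poly_monoc _ _ _ hc)) hIH.
  have [co hco] := op_poly hD.
  have [c hc] := pbnd_comp (poly co) (poly cs) (ex_intro _ co (fun h => leqnn _))
      (ex_intro _ cs (fun h => leqnn _)).
  exists c => mu /=; apply: leq_trans (hco _ _) _; first by rewrite size_map.
  apply: leq_trans (hc (Hm 0 V mu)); apply: poly_monoh; apply: maxlen_leq => i.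
  rewrite size_map => hi; rewrite (nth_map (Var O 0)) //; exact: hcs.
- have hV2 : {subset varsE e2 <= V} by move=> z hz; apply: hV; rewrite /= mem_cat hz orbT.
  have [c2 hc2] := IH2 hV2.
  exists c2 => mu /=; rewrite size_nseq; apply: leq_trans (geq_minr _ _) _; exact: hc2.
Qed.

Lemma closed_size N : 0 < N -> closedP (fun w => size w <= N).
Proof.
move=> hN; split.
- move=> w v hw hvw; exact: leq_trans (size_infix hvw) hw.
- by [].
- by [].
- by move=> w k hw hk; rewrite size_nseq; apply: leq_trans hk hw.
Qed.

Lemma Hm_upd j V mu x w m : (j <= Gamma x -> size w <= m) -> Hm j V mu <= m ->
  Hm j V (upd mu x w) <= m.
Proof.
move=> hw hm; apply: Hm_leq => y hy hj; rewrite upd_eq; case: (y =P x) => [eq|_].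
- subst y; exact: hw.
- exact: leq_trans (leq_Hm _ hy hj) hm.
Qed.

Lemma allst_mono (P Q : store -> Prop) ms : (forall m, P m -> Q m) -> allst P ms -> allst Q ms.
Proof. by move=> h; elim: ms => [|m ms IH] //= [hm hms]; split; [apply: h | apply: IH]. Qed.

Lemma pbnd_pow g m : pbnd g -> pbnd (fun h => g h ^ m).
Proof.
move=> hg; elim: m => [|m IH]; first exact: (pbnd_const 1).
apply: pbnd_ext (pbnd_mul _ _ hg IH) => h; by rewrite expnS.
Qed.

Section Loop2.
Variable Rt : conf -> Prop.
Hypothesis hAP : APall Rt.
Variables (e : expr) (s : stmt) (tau tout' : nat) (V : seq nat).
Hypotheses (he : etyp tau tout' e tau) (hs : styp tau tout' s tau) (htau : 1 <= tau <= tout')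
  (hV : {subset varsS (While e s) <= V}).
Variable cb : nat.
Hypothesis hB : forall mu b mu', reach Rt (mu, s) -> exec mu s b mu' ->
  forall j, Hm j V mu' <= Hm j V mu + poly cb (Hm j.+1 V mu).

Local Notation W := (While e s).

Lemma hVs2 : {subset varsS s <= V}.
Proof. by move=> x hx; apply: hV; rewrite /= mem_cat hx orbT. Qed.

Lemma body_pres2 (P : word -> Prop) K : closedP P -> tau <= K -> forall m b m', exec m s b m' ->
  Inv P K V m -> Inv P K V m'.
Proof.
case/andP: htau => h1 h2 hP hK m b m' hx; apply: (exec_closed hP hx hs) => //.
- exact: leq_trans h1 h2.
- exact: leq_trans h1 hK.
- exact: hVs2.
Qed.

Lemma count_iters : exists cQ, forall mu ms mu', reach Rt (mu, W) -> iters e s mu ms mu' ->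
  size ms <= poly cQ (Hm tau V mu).
Proof.
pose g h := size V * ((h + 2) * (h + 2)) + (h + 4).
have [cQ hcQ] : pbnd (fun h => g h ^ size (U e)).
  apply: pbnd_pow; apply: pbnd_add.
  - apply: pbnd_mul; first exact: pbnd_const.
    by apply: pbnd_mul; apply: (pbnd_add _ _ pbnd_id (pbnd_const 2)).
  - exact: (pbnd_add _ _ pbnd_id (pbnd_const 4)).
exists cQ => mu ms mu' hr hit.
pose I := Inv (fun w => w \in Sset tau (maxn 1 (Hm tau V mu)) V mu) tau V.
have [_ hall] := iters_inv (I := I) (fun m b m' hx hm => body_pres2 (Sclosed tau V mu) (leqnn _) hx hm)
  hit (Sset_init _ mu).
have hsub := keys_in hall (key_Fk he htau hV (mu := mu)).
apply: leq_trans (chain_count2 hAP (iters_pchain hit) hr hsub) _.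
rewrite /Fk size_seqsN; apply: leq_trans (hcQ _).
apply: exp_mono; apply: leq_trans (size_Sset (Inv_Hm mu)) _.
rewrite /g; have : maxn 1 (Hm tau V mu) <= (Hm tau V mu).+1.
  by rewrite geq_max ltnS leqnSn andbT.
set N := maxn 1 _; set h := Hm tau V mu; move=> hN.
apply: leq_add; last by rewrite addn4 !ltnS.
by apply: leq_mul => //; apply: leq_mul; rewrite addn2 ltnS.
Qed.

Lemma high_chain K mu ms mu' : tau <= K -> iters e s mu ms mu' ->
  Hm K V mu' <= maxn 1 (Hm K V mu) /\ allst (fun m => Hm K V m <= maxn 1 (Hm K V mu)) ms.
Proof.
move=> hK hit.
have hc := closed_size (N := maxn 1 (Hm K V mu)) (leq_maxl _ _).
have [h1 h2] := iters_inv (I := Inv (fun w => size w <= maxn 1 (Hm K V mu)) K V)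
  (fun m b m' hx hm => body_pres2 hc hK hx hm) hit (Inv_Hm mu).
split; first exact: Hm_leq h1.
by apply: allst_mono h2 => m hm; apply: Hm_leq.
Qed.

Lemma bnd_chain j G mu ms mu' : iters e s mu ms mu' -> reach Rt (mu, W) ->
  allst (fun m => Hm j.+1 V m <= G) ms ->
  Hm j V mu' <= Hm j V mu + size ms * poly cb G /\
  allst (fun m => Hm j V m <= Hm j V mu + size ms * poly cb G) ms.
Proof.
elim=> {mu ms mu'} [m hg|m m' hg hx|m m1 ms m' hg hx hit IH] hr /=.
- by move=> _; rewrite mul1n leq_addr; split.
- move=> [hm _]; rewrite mul1n leq_addr; split=> //.
  apply: leq_trans (hB (reach_body2 hr hg) hx j) _; rewrite leq_add2l.
  exact: poly_monoh.
- move=> [hm hall].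
  have h1 : Hm j V m1 <= Hm j V m + poly cb G.
    apply: leq_trans (hB (reach_body2 hr hg) hx j) _; rewrite leq_add2l.
    exact: poly_monoh.
  have [IH1 IH2] := IH (reach_step2 hr hg hx) hall.
  have hle : forall y, y <= Hm j V m1 + size ms * poly cb G ->
      y <= Hm j V m + (size ms).+1 * poly cb G.
    move=> y hy; apply: leq_trans hy _; rewrite mulSn addnA leq_add2r.
    exact: h1.
  split; first exact: hle.
  split; first by rewrite leq_addr.
  by apply: allst_mono IH2 => y hy; apply: hle.
Qed.

Definition Dst k c := forall mu ms mu', iters e s mu ms mu' -> reach Rt (mu, W) ->
  Hm (tau - k) V mu' <= poly c (Hm (tau - k) V mu) /\
  allst (fun m => Hm (tau - k) V m <= poly c (Hm (tau - k) V mu)) ms.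

Lemma Dst_mono k c c' : c <= c' -> Dst k c -> Dst k c'.
Proof.
move=> hc h mu ms mu' hit hr; have [h1 h2] := h mu ms mu' hit hr; split.
- exact: leq_trans h1 (poly_monoc _ _ _ hc).
- by apply: allst_mono h2 => m hm; apply: leq_trans hm (poly_monoc _ _ _ hc).
Qed.

Lemma maxn1_poly h : maxn 1 h <= poly 1 h.
Proof. by rewrite /poly mul1n expn1 geq_max ltnS leqnSn andbT. Qed.

Lemma chain_D k : k <= tau -> exists c, Dst k c.
Proof.
elim: k => [|k IH] hk.
  exists 1 => mu ms mu' hit hr; rewrite subn0; have [h1 h2] := high_chain (leqnn tau) hit.
  split; first exact: leq_trans h1 (maxn1_poly _).
  by apply: allst_mono h2 => m hm; apply: leq_trans hm (maxn1_poly _).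
have [c IHc] := IH (ltnW hk).
have [cQ hcQ] := count_iters.
have [c' hc'] : pbnd (fun h => h + poly cQ h * poly cb (poly c h)).
  apply: pbnd_add; first exact: pbnd_id.
  apply: pbnd_mul; first by exists cQ.
  by apply: pbnd_comp; [exists cb | exists c].
exists c' => mu ms mu' hit hr.
have hj : tau - k = (tau - k.+1).+1 by rewrite subnSK.
set j := tau - k.+1 in hj *.
have [A1 A2] := IHc mu ms mu' hit hr; rewrite hj in A1 A2.
have [B1 B2] := bnd_chain hit hr A2.
have hjt : j <= tau by rewrite /j leq_subr.
have key : Hm j V mu + size ms * poly cb (poly c (Hm j.+1 V mu)) <= poly c' (Hm j V mu).
  apply: leq_trans (hc' _); rewrite leq_add2l; apply: leq_mul.
  + apply: leq_trans (hcQ _ _ _ hr hit) _; apply: poly_monoh; exact: Hm_mono.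
  + apply: poly_monoh; apply: poly_monoh; exact: Hm_mono.
split; first exact: leq_trans B1 key.
by apply: allst_mono B2 => m hm; apply: leq_trans hm key.
Qed.

Lemma loop_bnd : exists c, forall mu b mu', reach Rt (mu, W) -> exec mu W b mu' ->
  forall j, Hm j V mu' <= Hm j V mu + poly c (Hm j.+1 V mu).
Proof.
have [cD hD] := pbnd_combine _ _ Dst_mono (fun k (hk : k < tau.+1) => chain_D hk).
have [cQ hcQ] := count_iters.
have [c hc] : pbnd (fun h => 1 + poly cQ h * poly cb (poly cD h)).
  apply: pbnd_add; first exact: pbnd_const.
  apply: pbnd_mul; first by exists cQ.
  by apply: pbnd_comp; [exists cb | exists cD].
exists c => mu b mu' hr hx j.
have [ms hit] := exec_iters hx.
case: (leqP tau j) => hj.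
  have [h1 _] := high_chain hj hit; apply: leq_trans h1 _.
  rewrite geq_max; apply/andP; split.
  - apply: leq_trans (leq_addl _ _); apply: leq_trans (hc _); exact: leq_addr.
  - exact: leq_addr.
have hk : tau - (tau - j.+1) = j.+1 by rewrite subKn.
have [A1 A2] := hD (tau - j.+1) (leq_ltn_trans (leq_subr _ _) (ltnSn _)) mu ms mu' hit hr.
rewrite hk in A1 A2.
have [B1 _] := bnd_chain hit hr A2.
apply: leq_trans B1 _; rewrite leq_add2l; apply: leq_trans (hc _).
apply: leq_trans (leq_addl 1 _); apply: leq_mul; last by [].
apply: leq_trans (hcQ _ _ _ hr hit) _; apply: poly_monoh; exact: Hm_mono.
Qed.

End Loop2.

Lemma exec_skip_inv mu b mu' : exec mu (Skip O) b mu' -> mu' = mu.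
Proof. by move=> h; inversion h. Qed.

Lemma exec_brk_inv mu e b mu' : exec mu (Break e) b mu' -> mu' = mu.
Proof. by move=> h; inversion h. Qed.

Lemma exec_asg_inv mu x e b mu' : exec mu (Asg x e) b mu' -> mu' = upd mu x (eval mu e).
Proof. by move=> h; inversion h. Qed.

Lemma exec_seq_inv mu s1 s2 b mu' : exec mu (Seq s1 s2) b mu' ->
  exec mu s1 false mu' \/ exists mu1, exec mu s1 true mu1 /\ exec mu1 s2 b mu'.
Proof. move=> h; inversion h; subst; [by left | by right; exists mu'0]. Qed.

Lemma exec_if_inv mu e s1 s2 b mu' : exec mu (If e s1 s2) b mu' ->
  (eval mu e = w1 /\ exec mu s1 b mu') \/ (eval mu e <> w1 /\ exec mu s2 b mu').
Proof. move=> h; inversion h; subst; [by left | by right]. Qed.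

Lemma leq_poly_const c h : c <= poly c h.
Proof. by rewrite /poly -{1}(muln1 c) leq_mul // expn_gt0. Qed.

Lemma stmt_bnd_loop (Rt : conf -> Prop) (V : seq nat) : APall Rt ->
  forall s ti tout t, styp ti tout s t -> 0 < tout -> {subset varsS s <= V} ->
  exists c, forall mu b mu', reach Rt (mu, s) -> exec mu s b mu' ->
  forall j, Hm j V mu' <= Hm j V mu + poly c (Hm j.+1 V mu).
Proof.
move=> hAP; elim=> [|x e|s1 IH1 s2 IH2|e s1 IH1 s2 IH2|e s IH|e] ti tout t Hty hto hV.
- by exists 0 => mu b mu' _ /exec_skip_inv -> j; rewrite leq_addr.
- have [t2 [he [hto' hx]]] := inv_asg Hty.
  have hVe : {subset varsE e <= V} by move=> z hz; apply: hV; rewrite /= inE hz orbT.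
  have [ce hce] := eval_bnd_loop he hto hVe.
  exists ce => mu b mu' _ /exec_asg_inv -> j; apply: Hm_upd.
  + move=> hj; apply: leq_trans (hce mu j _) _.
      by case: hto' => [h0|h]; [move: hto; rewrite h0 | exact: leq_trans hj h].
    by rewrite leq_add2l leq_poly_const.
  + exact: leq_addr.
- have [t0 [_ [h1 h2]]] := inv_seq Hty.
  have [c1 hc1] := IH1 _ _ _ h1 hto (fun z hz => hV z (etrans (mem_cat z _ _) (introT orP (or_introl hz)))).
  have [c2 hc2] := IH2 _ _ _ h2 hto (fun z hz => hV z (etrans (mem_cat z _ _) (introT orP (or_intror hz)))).
  have [c hc] : pbnd (fun h => poly c1 h + poly c2 (h + poly c1 h)).
    apply: pbnd_add; first by exists c1.
    by apply: pbnd_comp; [exists c2 | apply: pbnd_add; [exact: pbnd_id | exists c1]].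
  exists c => mu b mu' hr /exec_seq_inv [hx|[mu1 [hx1 hx2]]] j.
  + apply: leq_trans (hc1 _ _ _ (reach_child hr (C_seq1 _ _ _ _ _)) hx j) _.
    by rewrite leq_add2l; apply: leq_trans (hc _); apply: leq_addr.
  + have hr1 := reach_child hr (C_seq1 _ _ _ _ _).
    have hr2 := reach_child hr (C_seq2 _ hx1).
    have a1 := hc1 _ _ _ hr1 hx1 j.
    have a2 : Hm j.+1 V mu1 <= Hm j.+1 V mu + poly c1 (Hm j.+1 V mu).
      apply: leq_trans (hc1 _ _ _ hr1 hx1 j.+1) _; rewrite leq_add2l.
      by apply: poly_monoh; apply: Hm_mono.
    apply: leq_trans (hc2 _ _ _ hr2 hx2 j) _.
    apply: leq_trans (leq_add a1 (poly_monoh _ _ _ a2)) _.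
    by rewrite -addnA leq_add2l; apply: hc.
- have [t0 [_ [_ [h1 h2]]]] := inv_if Hty.
  have [c1 hc1] := IH1 _ _ _ h1 hto (fun z hz => hV z (etrans (mem_cat z _ _) (introT orP (or_intror (etrans (mem_cat z _ _) (introT orP (or_introl hz))))))).
  have [c2 hc2] := IH2 _ _ _ h2 hto (fun z hz => hV z (etrans (mem_cat z _ _) (introT orP (or_intror (etrans (mem_cat z _ _) (introT orP (or_intror hz))))))).
  exists (c1 + c2) => mu b mu' hr /exec_if_inv [[hg hx]|[hg hx]] j.
  + apply: leq_trans (hc1 _ _ _ (reach_child hr (C_if_t _ _ hg)) hx j) _.
    by rewrite leq_add2l poly_monoc // leq_addr.
  + apply: leq_trans (hc2 _ _ _ (reach_child hr (C_if_f _ _ hg)) hx j) _.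
    by rewrite leq_add2l poly_monoc // leq_addl.
- have [tau [tout' [h1 h2 h3 _ _]]] := inv_wh Hty.
  have hto' : 0 < tout' by case/andP: h3 => a b; exact: leq_trans a b.
  have [cb hcb] := IH _ _ _ h2 hto' (fun z hz => hV z (etrans (mem_cat z _ _) (introT orP (or_intror hz)))).
  exact: (loop_bnd hAP h1 h2 h3 hV hcb).
- by exists 0 => mu b mu' _ /exec_brk_inv -> j; rewrite leq_addr.
Qed.

Lemma stmt_bnd_top (Rt : conf -> Prop) (V : seq nat) : APall Rt ->
  forall s t, styp 0 0 s t -> {subset varsS s <= V} ->
  exists c, forall mu b mu', reach Rt (mu, s) -> exec mu s b mu' ->
  Hm 0 V mu' <= poly c (Hm 0 V mu).
Proof.
move=> hAP; elim=> [|x e|s1 IH1 s2 IH2|e s1 IH1 s2 IH2|e s IH|e] t Hty hV.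
- by exists 1 => mu b mu' _ /exec_skip_inv ->; rewrite /poly mul1n expn1.
- have [t2 [he _]] := inv_asg Hty.
  have hVe : {subset varsE e <= V} by move=> z hz; apply: hV; rewrite /= inE hz orbT.
  have [ce hce] := eval_bnd_top he hVe.
  have [c hc] : pbnd (fun h => h + poly ce h) by apply: pbnd_add; [exact: pbnd_id | exists ce].
  exists c => mu b mu' _ /exec_asg_inv ->; apply: Hm_upd.
  + move=> _; apply: leq_trans (hce mu) _; apply: leq_trans (hc _); exact: leq_addl.
  + apply: leq_trans (hc _); exact: leq_addr.
- have [t0 [_ [h1 h2]]] := inv_seq Hty.
  have [c1 hc1] := IH1 _ h1 (fun z hz => hV z (etrans (mem_cat z _ _) (introT orP (or_introl hz)))).
  have [c2 hc2] := IH2 _ h2 (fun z hz => hV z (etrans (mem_cat z _ _) (introT orP (or_intror hz)))).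
  have [c hc] : pbnd (fun h => poly c1 h + poly c2 (poly c1 h)).
    apply: pbnd_add; first by exists c1.
    by apply: pbnd_comp; [exists c2 | exists c1].
  exists c => mu b mu' hr /exec_seq_inv [hx|[mu1 [hx1 hx2]]].
  + apply: leq_trans (hc1 _ _ _ (reach_child hr (C_seq1 _ _ _ _ _)) hx) _.
    by apply: leq_trans (hc _); apply: leq_addr.
  + have a1 := hc1 _ _ _ (reach_child hr (C_seq1 _ _ _ _ _)) hx1.
    apply: leq_trans (hc2 _ _ _ (reach_child hr (C_seq2 _ hx1)) hx2) _.
    apply: leq_trans (poly_monoh _ _ _ a1) _.
    by apply: leq_trans (hc _); apply: leq_addl.
- have [t0 [_ [_ [h1 h2]]]] := inv_if Hty.
  have [c1 hc1] := IH1 _ h1 (fun z hz => hV z (etrans (mem_cat z _ _) (introT orP (or_intror (etrans (mem_cat z _ _) (introT orP (or_introl hz))))))).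
  have [c2 hc2] := IH2 _ h2 (fun z hz => hV z (etrans (mem_cat z _ _) (introT orP (or_intror (etrans (mem_cat z _ _) (introT orP (or_intror hz))))))).
  exists (c1 + c2) => mu b mu' hr /exec_if_inv [[hg hx]|[hg hx]].
  + apply: leq_trans (hc1 _ _ _ (reach_child hr (C_if_t _ _ hg)) hx) _.
    by rewrite poly_monoc // leq_addr.
  + apply: leq_trans (hc2 _ _ _ (reach_child hr (C_if_f _ _ hg)) hx) _.
    by rewrite poly_monoc // leq_addl.
- have [tau [tout' [h1 h2 h3 _ _]]] := inv_wh Hty.
  have hto' : 0 < tout' by case/andP: h3 => a b; exact: leq_trans a b.
  have [cb hcb] := stmt_bnd_loop hAP h2 hto' (fun z hz => hV z (etrans (mem_cat z _ _) (introT orP (or_intror hz)))).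
  have [c hc] := loop_bnd hAP h1 h2 h3 hV hcb.
  have [c' hc'] : pbnd (fun h => h + poly c h) by apply: pbnd_add; [exact: pbnd_id | exists c].
  exists c' => mu b mu' hr hx; apply: leq_trans (hc _ _ _ hr hx 0) _.
  apply: leq_trans (hc' _); rewrite leq_add2l; apply: poly_monoh; exact: Hm_mono.
- by exists 1 => mu b mu' _ /exec_brk_inv ->; rewrite /poly mul1n expn1.
Qed.
End Main.

Lemma two_pow_beats c : exists n, c * n.+1 ^ c < 2 ^ n.
Proof.
have sq : forall a, 4 <= a -> a * a <= 2 ^ a.
  elim=> [|a IH] //; rewrite leq_eqVlt => /orP[/eqP <-|ha] //.
  have := IH ha; rewrite expnS; nia.
set a := c + 5.
exists (2 ^ a).-1; rewrite prednK ?expn_gt0 // -expnM.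
apply: (@leq_trans (2 ^ c * 2 ^ (a * c))).
  by rewrite ltn_pmul2r ?expn_gt0 // ltn_expl.
rewrite -expnD leq_pexp2l //.
have h : a * a <= 2 ^ a by apply: sq; rewrite /a; lia.
move: h; rewrite /a => h.
have : 0 < 2 ^ (c + 5) by rewrite expn_gt0.
lia.
Qed.

Section Final.
Variables (Sigma : finType) (zero one : Sigma) (O : Type) (ar : O -> nat)
  (sem : O -> seq (seq Sigma) -> seq Sigma).
Hypothesis hz1 : zero != one.

Lemma init_size (xs : seq nat) (ws : seq (seq Sigma)) (mu : store Sigma) m x :
  (forall y, size (mu y) <= m) -> (forall i, i < size ws -> size (nth [::] ws i) <= m) ->
  size (init_store mu xs ws x) <= m.
Proof.
elim: xs ws mu => [|y xs IH] [|w ws] mu hmu hws //=; try exact: hmu.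
apply: IH.
- move=> z; rewrite /upd; case: eqP => _; [exact: (hws 0) | exact: hmu].
- by move=> i hi; apply: (hws i.+1).
Qed.

Lemma part1 (P : prog O) : SAFE zero one ar sem P -> AP one sem P -> TERM one ar sem P.
Proof.
move=> [Delta [Gamma [t [hsafe Hty]]]] hAP; split; first exact: styp_wf Hty.
move=> ws _.
set r0 := (init_store (store0 Sigma) (params P) ws, body P).
have hAPr : APall one sem (fun r => r = r0).
  move=> r -> [mu' [mu'' [e [s'' H]]]]; apply: hAP.
  by exists (init_store (store0 Sigma) (params P) ws), mu', mu'', e, s''.
have [b [mu' hx]] := term_all hsafe hAPr Hty (ex_intro _ r0 (conj erefl (rt_refl _ _ _))).
by exists (mu' (ret P)), b, mu'.
Qed.

Variables (olt osc opr : O).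
Hypotheses (hlt : is_lt_op zero one ar sem olt) (hsc : is_succ_op one ar sem osc)
  (hpr : is_pred_op ar sem opr).

Local Notation exec := (exec one sem).
Local Notation eval := (eval one sem).

Definition gt0 (a : nat) : expr O := Op olt [:: Var O 3; Var O a].
Definition inner : stmt O :=
  While (gt0 2) (Seq (Asg 1 (Op osc [:: Var O 1])) (Asg 2 (Op opr [:: Var O 2]))).
Definition outer : stmt O :=
  While (gt0 0) (Seq (Asg 2 (Var O 1)) (Seq inner (Asg 0 (Op opr [:: Var O 0])))).
Definition Pexp : prog O := Prog [:: 0] (Seq (Asg 1 (Op osc [:: Var O 3])) outer) 1.

Lemma eval_gt0 (mu : store Sigma) a : mu 3 = [::] ->
  eval mu (gt0 a) = bool_w zero one (0 < size (mu a)).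
Proof. by move=> h; rewrite /= (proj2 hlt) h. Qed.

Lemma bool_true b : (bool_w zero one b = w1 one) <-> b.
Proof.
case: b => //; split=> // h; move: h; rewrite /bool_w /Defs.w0 /Defs.w1 => -[] h.
by move: hz1; rewrite h eqxx.
Qed.

Lemma inner_sem k (mu : store Sigma) a : mu 3 = [::] -> size (mu 2) = k -> mu 1 = nseq a one ->
  exists mu', [/\ exec mu inner true mu', mu' 1 = nseq (k + a) one, mu' 3 = [::] & mu' 0 = mu 0].
Proof.
elim: k mu a => [|k IH] mu a h3 h2 h1.
  exists mu; split=> //; apply: E_wh_f; rewrite eval_gt0 // h2 => /bool_true.
  by [].
pose mu1 := upd (upd mu 1 (one :: mu 1)) 2 (behead (mu 2)).
have hx1 : exec mu (Seq (Asg 1 (Op osc [:: Var O 1])) (Asg 2 (Op opr [:: Var O 2]))) true mu1.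
  apply: E_seq_top; first exact: E_asg.
  have -> : mu1 = upd (upd mu 1 (eval mu (Op osc [:: Var O 1]))) 2
     (eval (upd mu 1 (eval mu (Op osc [:: Var O 1]))) (Op opr [:: Var O 2])).
    by rewrite /mu1 /= (proj2 hsc) (proj2 hpr).
  exact: E_asg.
have [mu' [hx h1' h3' h0']] := IH mu1 a.+1 ltac:(by rewrite /mu1 /upd /= h3)
  ltac:(by rewrite /mu1 /upd /= size_behead h2) ltac:(by rewrite /mu1 /upd /= h1).
exists mu'; split=> //.
- apply: E_wh_t; first by rewrite eval_gt0 // h2; apply/bool_true.
  exact: E_seq_top hx1 hx.
- by rewrite h1' addnS.
Qed.

Lemma outer_sem n (mu : store Sigma) a : mu 3 = [::] -> size (mu 0) = n -> mu 1 = nseq a one ->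
  exists mu', exec mu outer true mu' /\ mu' 1 = nseq (a * 2 ^ n) one.
Proof.
elim: n mu a => [|n IH] mu a h3 h0 h1.
  exists mu; split; last by rewrite expn0 muln1.
  by apply: E_wh_f; rewrite eval_gt0 // h0 => /bool_true.
pose mu1 := upd mu 2 (mu 1).
have [mu2 [hx2 h12 h32 h02]] := inner_sem (mu := mu1) (a := a) ltac:(by []) ltac:(by rewrite /mu1 /upd /= h1 size_nseq)
  ltac:(by rewrite /mu1 /upd /= h1).
pose mu3 := upd mu2 0 (behead (mu2 0)).
have [mu' [hx' h1']] := IH mu3 (a + a) ltac:(by rewrite /mu3 /upd /= h32)
  ltac:(by rewrite /mu3 /upd /= size_behead h02 /mu1 /upd /= h0) ltac:(by rewrite /mu3 /upd /= h12).
exists mu'; split.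
- apply: E_wh_t; first by rewrite eval_gt0 // h0; apply/bool_true.
  apply: E_seq_top hx'.
  apply: E_seq_top; first exact: E_asg.
  apply: E_seq_top hx2 _.
  have -> : mu3 = upd mu2 0 (eval mu2 (Op opr [:: Var O 0])) by rewrite /mu3 /= (proj2 hpr).
  exact: E_asg.
- by rewrite h1' expnS mulnA muln2 addnn.
Qed.

Lemma Pexp_sem (w : seq Sigma) : exists b mu', exec (init_store (store0 Sigma) [:: 0] [:: w]) (body Pexp) b mu' /\
  mu' 1 = nseq (2 ^ size w) one.
Proof.
set mu0 := init_store _ _ _.
pose mu1 := upd mu0 1 (eval mu0 (Op osc [:: Var O 3])).
have [mu' [hx h1]] := outer_sem (mu := mu1) (a := 1) ltac:(by []) ltac:(by []) ltac:(by rewrite /mu1 /upd /= (proj2 hsc)).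
exists true, mu'; split; last by rewrite h1 mul1n.
apply: E_seq_top hx; exact: E_asg.
Qed.

Lemma Pexp_term : TERM one ar sem Pexp.
Proof.
split.
  by rewrite /wf_prog /= (proj1 hlt) (proj1 hsc) (proj1 hpr).
move=> [|w [|w' ws]] // _.
have [b [mu' [hx h1]]] := Pexp_sem w.
by exists (mu' 1), b, mu'.
Qed.

Lemma part2 (Q : prog O) : SAFE zero one ar sem Q -> AP one sem Q -> ~ same_fun one sem Q Pexp.
Proof.
move=> [Delta [Gamma [t [hsafe Hty]]]] hAP [hsz hsame].
pose V := ret Q :: params Q ++ varsS (body Q).
have hV : {subset varsS (body Q) <= V} by move=> x hx; rewrite inE mem_cat hx !orbT.
pose Rt := fun r : conf Sigma O => exists mu, r = (mu, body Q).
have hA : APall one sem Rt.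
  move=> r [mu ->] [mu' [mu'' [e [s'' H]]]]; apply: hAP; by exists mu, mu', mu'', e, s''.
have [c hc] := stmt_bnd_top hsafe hA Hty hV.
have [n hn] := two_pow_beats c.
pose w := nseq n one.
have [b [mu' [hx h1]]] := Pexp_sem w.
have hP : prog_sem one sem Pexp [:: w] (nseq (2 ^ size w) one).
  by exists b, mu'.
have hs1 : size [:: w] = size (params Q) by rewrite hsz.
have [bq [muq [hxq hretq]]] := (proj2 (hsame [:: w] _ hs1)) hP.
set mu0 := init_store (store0 Sigma) (params Q) [:: w] in hxq.
have hr : reach one sem Rt (mu0, body Q) by exists (mu0, body Q); split; [exists mu0 | exact: rt_refl].
have hb := hc _ _ _ hr hxq.
have h0 : Hm Gamma 0 V mu0 <= n.
  apply: Hm_leq => x _ _; apply: init_size => //.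
  by case=> [|i] //= _; rewrite size_nseq.
have hret : size (muq (ret Q)) <= Hm Gamma 0 V muq by apply: leq_Hm; rewrite ?inE ?eqxx.
move: hn; rewrite ltnNge => /negP; apply.
apply: leq_trans (leq_trans hret (leq_trans hb (poly_monoh _ _ _ h0))).
by rewrite hretq size_nseq /w size_nseq.
Qed.

End Final.

Unset Implicit Arguments.

Theorem mainTheorem3 (Sigma : finType) (zero one : Sigma) (O : Type)
  (ar : O -> nat) (sem : O -> seq (seq Sigma) -> seq Sigma) :
  zero != one ->
  has_basic_ops zero one ar sem ->
  (forall P : prog O, SAFE zero one ar sem P -> AP one sem P -> TERM one ar sem P) /\
  (exists P : prog O, TERM one ar sem P /\
     forall Q : prog O, SAFE zero one ar sem Q -> AP one sem Q -> ~ same_fun one sem Q P).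
Proof.
move=> hz [_ [[olt hlt] [_ [_ [[osc hsc] [[opr hpr] _]]]]]].
split; first exact: part1.
exists (Pexp olt osc opr); split; first exact: (Pexp_term hz hlt hsc hpr).
move=> Q hS hA; exact: (part2 hz hlt hsc hpr hS hA).
Qed.
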